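(* There exist a finite alphabet $\Sigma$ and a set $L\subseteq\mathcal{T}_\Sigma$ of infinite $\Sigma$-labeled binary trees recognized by a deterministic automaton such that $L$ is comeager in $\mathcal{T}_\Sigma$ and $\mu(L)=0$.
   Context: The full binary tree is $V=\{L,R\}^*$ (root $\epsilon$). A $\Sigma$-tree is a map $t:V\to\Sigma$, and $\mathcal{T}_\Sigma=\Sigma^V$ with the product topology ($\Sigma$ discrete). A set is comeager if its complement is a countable union of nowhere dense sets. The coin-flipping measure $\mu$ on $\mathcal{T}_\Sigma$ is the product probability measure with $\mu(\{t : t(v_1)=a_1,\dots,t(v_k)=a_k\})=|\Sigma|^{-k}$ for pairwise distinct $v_i$. An alternating parity tree automaton is $\mathcal{A}=\langle\Sigma,Q,q_0,\delta,\pi\rangle$ with finite $Q$, $q_0\in Q$, $\pi:Q\to\omega$ and $\delta(q,a)$ a positive Boolean combination (using $\wedge,\vee$) of elements of $\{L,R\}\times Q$. A tree $t$ is accepted if player $\exists$ wins the game starting at $\langle\epsilon,q_0\rangle$ in which: from $\langle x,q\rangle$ the game moves to $\langle x,\delta(q,t(x))\rangle$; at a disjunction $\exists$ chooses a disjunct, at a conjunction $\forall$ chooses a conjunct; $\langle x,(D,q)\rangle$ moves to $\langle xD,q\rangle$ for $D\in\{L,R\}$; an infinite play is won by $\exists$ iff the largest priority $\pi(q)$ among states $q$ visited infinitely often (in positions $\langle x,q\rangle$) is even. A deterministic automaton is one in which every $\delta(q,a)$ has the form $(L,q_L)\wedge(R,q_R)$. *)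

(* Defs.v *)
From HB Require Import structures.
From mathcomp Require Import all_boot all_order all_algebra.
From mathcomp Require Import all_classical all_reals all_analysis.
Set Implicit Arguments. Unset Strict Implicit. Unset Printing Implicit Defensive.
Import Order.TTheory GRing.Theory Num.Theory.
Local Open Scope classical_set_scope.
Local Open Scope ring_scope.

(** Vertices of the full binary tree: a vertex is the word over {L,R}
    (false = L, true = R) leading to it from the root, stored in REVERSED
    order: the root eps is [::] and the child xD of x is D :: x. *)
Definition vertex := seq bool.
Definition root : vertex := [::].
Definition child (x : vertex) (D : bool) : vertex := D :: x.

Definition Sigma (n : nat) := 'I_n.+1.
HB.instance Definition _ (n : nat) := Finite.on (Sigma n).
HB.instance Definition _ (n : nat) := isPointed.Build (Sigma n) ord0.

Definition tree (n : nat) := vertex -> Sigma n.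

Definition tree_top (n : nat) :=
  prod_topology (fun _ : vertex => discrete_topology (Sigma n)).

Definition nowhere_dense (T : topologicalType) (A : set T) : Prop :=
  interior (closure A) = set0.
Definition comeager (T : topologicalType) (A : set T) : Prop :=
  exists N : nat -> set T, (forall k, nowhere_dense (N k)) /\
    ~` A `<=` \bigcup_k N k.

Definition cylinder (n : nat) (s : seq (vertex * Sigma n)) : set (tree n) :=
  [set t | forall p, p \in s -> t p.1 = p.2].
Definition cylinders (n : nat) : set (set (tree n)) :=
  [set C | exists s, C = cylinder s].

Notation tree_meas n := (g_sigma_algebraType (@cylinders n)).

(** mu is the coin-flipping measure: mu(cylinder) = |Sigma|^-k for
    pairwise distinct v_1..v_k. (This determines mu uniquely.) *)
Definition coin_flipping (n : nat) (R : realType)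
  (mu : {measure set (tree_meas n) -> \bar R}) : Prop :=
  forall s : seq (vertex * Sigma n), uniq (map fst s) ->
    mu (cylinder s) = ((#|Sigma n|%:R)^-1 ^+ size s)%:E.

(** Deterministic parity tree automata: delta(q,a) = (L,q_L) /\ (R,q_R),
    encoded as the pair (q_L, q_R). *)
Record dpa (n : nat) := DPA {
  state : finType;
  q0 : state;
  delta : state -> Sigma n -> state * state;
  pri : state -> nat }.

Fixpoint run n (A : dpa n) (t : tree n) (x : vertex) : state A :=
  match x with
  | [::] => q0 A
  | D :: y => let qs := delta (run A t y) (t y) in if D then qs.2 else qs.1
  end.

Fixpoint branch_vertex (beta : nat -> bool) (k : nat) : vertex :=
  match k with
  | 0 => root
  | k'.+1 => child (branch_vertex beta k') (beta k')
  end.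

Definition inf_often (Q : Type) (r : nat -> Q) (q : Q) : Prop :=
  forall N, exists2 m, (N <= m)%N & r m = q.
Definition parity_win (Q : Type) (pi : Q -> nat) (r : nat -> Q) : Prop :=
  exists q, [/\ inf_often r q, ~~ odd (pi q) &
                forall q', inf_often r q' -> (pi q' <= pi q)%N].

(** Acceptance: in the acceptance game for a deterministic automaton,
    Eloise has no choices, Abelard picks a direction at each step, and the
    states visited along the play are the run along the chosen branch; so
    Eloise wins iff every branch satisfies the parity condition. *)
Definition accepts n (A : dpa n) (t : tree n) : Prop :=
  forall beta : nat -> bool,
    parity_win (@pri n A) (fun k => run A t (branch_vertex beta k)).

Definition lang n (A : dpa n) : set (tree n) := [set t | accepts A t].

(* Main.v *)
Require Import Defs.
From HB Require Import structures.
From mathcomp Require Import all_boot all_order all_algebra.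
From mathcomp Require Import all_classical all_reals all_analysis.
From mathcomp Require Import zify.
From mathcomp.algebra_tactics Require Import ring lra.
Set Implicit Arguments. Unset Strict Implicit. Unset Printing Implicit Defensive.
Import Order.TTheory GRing.Theory Num.Theory.
Import numFieldNormedType.Exports.
Local Open Scope classical_set_scope.
Local Open Scope ring_scope.
Definition aa : Sigma 3 := ord0.

Definition catall (A B : seq (seq vertex)) : seq (seq vertex) :=
  [seq c1 ++ c2 | c1 <- A, c2 <- B].
Arguments catall : simpl never.

Fixpoint cuts (k : nat) (x : vertex) : seq (seq vertex) :=
  match k with
  | 0 => [:: [:: x]]
  | k'.+1 => [:: x] :: catall (cuts k' (false :: x)) (cuts k' (true :: x))
  end.

Definition allA (t : tree 3) (c : seq vertex) := forall v, v \in c -> t v = aa.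

Lemma mem_ap (A B : seq (seq vertex)) z :
  reflect (exists c1 c2, [/\ c1 \in A, c2 \in B & z = c1 ++ c2])
    (z \in catall A B).
Proof.
apply: (iffP allpairsPdep) => [[c1 [c2 h]]|[c1 [c2 h]]]; by exists c1, c2.
Qed.

Lemma allA_cat t c1 c2 : allA t c1 -> allA t c2 -> allA t (c1 ++ c2).
Proof. by move=> h1 h2 v; rewrite mem_cat => /orP[/h1|/h2]. Qed.

Lemma cuts_mono k x c : c \in cuts k x -> c \in cuts k.+1 x.
Proof.
elim: k x c => [|k IH] x c /=.
  by rewrite inE => /eqP->; rewrite inE eqxx.
rewrite inE => /orP[/eqP->|]; first by rewrite inE eqxx.
move=> /mem_ap[c1 [c2 [h1 h2 ->]]].
rewrite inE; apply/orP; right; apply/mem_ap; exists c1, c2.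
by split => //; apply: IH.
Qed.

Lemma cuts_monoL k k' x c : (k <= k')%N -> c \in cuts k x -> c \in cuts k' x.
Proof.
move=> /subnK <-; elim: (k' - k)%N => // j IH h.
by rewrite addSn; apply: cuts_mono; apply: IH.
Qed.

Definition good (t : tree 3) (v : vertex) :=
  forall k c, c \in cuts k v -> ~ allA t c.

Lemma good_step t v : good t v ->
  t v <> aa /\ (good t (false :: v) \/ good t (true :: v)).
Proof.
move=> g; split.
  move=> tv; apply: (g 0%N [:: v]); first by rewrite inE.
  by move=> u; rewrite inE => /eqP->.
apply: contrapT => /not_orP[/existsNP[k1 /existsNP[c1 /not_implyP[h1 /contrapT a1]]]].
move=> /existsNP[k2 /existsNP[c2 /not_implyP[h2 /contrapT a2]]].
apply: (g (maxn k1 k2).+1 (c1 ++ c2)); last exact: allA_cat.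
rewrite /= inE; apply/orP; right; apply/mem_ap; exists c1, c2; split => //.
  by apply: cuts_monoL h1; rewrite leq_maxl.
by apply: cuts_monoL h2; rewrite leq_maxr.
Qed.

Definition Aut : dpa 3 :=
  @DPA 3 bool false (fun _ s => (s == aa, s == aa)) (fun b => if b then 2%N else 1%N).

Lemma run_cons t D y : run Aut t (D :: y) = (t y == aa).
Proof. by case: D. Qed.

Lemma runS t beta m : run Aut t (branch_vertex beta m.+1) = (t (branch_vertex beta m) == aa).
Proof. exact: run_cons. Qed.

Definition infa (t : tree 3) (beta : nat -> bool) :=
  forall N, exists2 m, (N <= m)%N & t (branch_vertex beta m) = aa.

Lemma acceptsE t : accepts Aut t <-> forall beta, infa t beta.
Proof.
split=> h beta.
  have [q [iq pq mq]] := h beta.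
  have qT : q = true by case: q pq iq mq.
  subst q => N; have [m Nm] := iq N.+1.
  case: m Nm => [//|m] Nm; rewrite runS => /eqP e.
  by exists m.
exists true; split => //; last by case.
move=> N; have [m Nm e] := h beta N.
by exists m.+1; [exact: leqW | rewrite runS e eqxx].
Qed.

Lemma hit k beta N c : c \in cuts k (branch_vertex beta N) ->
  exists j, branch_vertex beta (N + j) \in c.
Proof.
elim: k N c => [|k IH] N c /=.
  by rewrite inE => /eqP->; exists 0%N; rewrite addn0 inE.
rewrite inE => /orP[/eqP->|]; first by exists 0%N; rewrite addn0 inE.
move=> /mem_ap[c1 [c2 [h1 h2 ->]]].
have e : branch_vertex beta N.+1 = beta N :: branch_vertex beta N by [].
case b: (beta N) e => e.
  rewrite -e in h2; have [j hj] := IH _ _ h2.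
  by exists j.+1; rewrite addnS -addSn mem_cat hj orbT.
rewrite -e in h1; have [j hj] := IH _ _ h1.
by exists j.+1; rewrite addnS -addSn mem_cat hj.
Qed.

Lemma accept_of_die t :
  (forall x, exists k c, c \in cuts k x /\ allA t c) -> accepts Aut t.
Proof.
move=> h; apply/acceptsE => beta N.
have [k [c [hc ha]]] := h (branch_vertex beta N).
have [j hj] := hit hc.
by exists (N + j)%N; [exact: leq_addr | exact: ha].
Qed.

Section Branch.
Variables (t : tree 3) (x : vertex).

Definition nxt (v : vertex) : bool := `[< good t (true :: v) >].

Lemma good_nxt v : good t v -> good t (nxt v :: v).
Proof.
move=> /good_step[_ h]; rewrite /nxt.
case: asboolP => // ng; by case: h.
Qed.

Fixpoint qv k : vertex := if k is k'.+1 then nxt (qv k') :: qv k' else x.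

Definition bet k : bool :=
  if (k < size x)%N then nth false x (size x - k.+1) else nxt (qv (k - size x)).

Lemma bv_pre k : (k <= size x)%N -> branch_vertex bet k = drop (size x - k) x.
Proof.
elim: k => [|k IH] hk; first by rewrite subn0 drop_size.
rewrite /= IH ?(ltnW hk) // /child /bet hk.
have e : (size x - k.+1).+1 = (size x - k)%N by lia.
by rewrite [in RHS](drop_nth false) ?e //; lia.
Qed.

Lemma bv_post k : branch_vertex bet (size x + k) = qv k.
Proof.
elim: k => [|k IH]; first by rewrite addn0 bv_pre // subnn drop0.
rewrite addnS /= IH /child /bet ltnNge leq_addr /=.
by rewrite addKn.
Qed.

Lemma good_qv k : good t x -> good t (qv k).
Proof. move=> g; elim: k => [|k IH] //=; exact: good_nxt. Qed.
End Branch.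

Lemma good_notacc t x : good t x -> ~ accepts Aut t.
Proof.
move=> g /acceptsE /(_ (bet t x)) /(_ (size x)) [m hm e].
move: e; rewrite -(subnKC hm) bv_post.
by have [+ _] := good_step (@good_qv t x (m - size x) g).
Qed.

Lemma die_of_accept t : accepts Aut t -> forall x, exists k c, c \in cuts k x /\ allA t c.
Proof.
move=> acc x; apply: contrapT => h; apply: (good_notacc (x := x)) acc.
move=> k c hc ha; apply: h; by exists k, c.
Qed.

Definition xs (i : nat) : vertex := false :: nseq i true.

Fixpoint multi (K m : nat) : seq (seq vertex) :=
  if m is m'.+1 then catall (cuts K (xs m')) (multi K m') else [:: [::]].

Lemma multi_mono K K' m c : (K <= K')%N -> c \in multi K m -> c \in multi K' m.
Proof.
move=> hK; elim: m c => [//|m IH] c /= /mem_ap[c1 [c2 [h1 h2 ->]]].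
apply/mem_ap; exists c1, c2; split => //; last exact: IH.
exact: cuts_monoL h1.
Qed.

Lemma die_multi t : accepts Aut t -> forall m, exists K c, c \in multi K m /\ allA t c.
Proof.
move=> acc; elim=> [|m [K1 [d [hd ad]]]].
  by exists 0%N, [::]; split => //; rewrite inE.
have [K2 [c [hc ac]]] := die_of_accept acc (xs m).
exists (maxn K1 K2), (c ++ d); split; last exact: allA_cat.
apply/mem_ap; exists c, d; split => //.
  by apply: cuts_monoL hc; rewrite leq_maxr.
by apply: multi_mono hd; rewrite leq_maxl.
Qed.

Section Sums.
Variable R : realType.
Definition w (c : seq vertex) : R := (4%:R^-1) ^+ size c.

Lemma w_ge0 c : 0 <= w c.
Proof. by rewrite /w exprn_ge0 // invr_ge0. Qed.

Lemma sum_ge0 (s : seq (seq vertex)) : 0 <= \sum_(c <- s) w c.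
Proof. by apply: sumr_ge0 => c _; exact: w_ge0. Qed.

Lemma sum_catall A B :
  \sum_(c <- catall A B) w c = (\sum_(c <- A) w c) * (\sum_(c <- B) w c).
Proof.
rewrite /catall big_allpairs_dep mulr_suml; apply: eq_bigr => c1 _.
rewrite mulr_sumr; apply: eq_bigr => c2 _.
by rewrite /w size_cat exprD.
Qed.

Lemma sum_cuts k x : \sum_(c <- cuts k x) w c <= 2^-1.
Proof.
elim: k x => [|k IH] x /=.
  rewrite big_seq1 /w /= expr1; lra.
rewrite big_cons sum_catall.
have h1 := IH (false :: x); have h2 := IH (true :: x).
have g1 := sum_ge0 (cuts k (false :: x)); have g2 := sum_ge0 (cuts k (true :: x)).
have : (\sum_(c <- cuts k (false :: x)) w c) * (\sum_(c <- cuts k (true :: x)) w c) <= 2^-1 * 2^-1.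
  by apply: ler_pM.
rewrite /w /= expr1; lra.
Qed.

Lemma sum_multi K m : \sum_(c <- multi K m) w c <= (2^-1) ^+ m.
Proof.
elim: m => [|m IH] /=; first by rewrite big_seq1 /w expr0.
rewrite sum_catall exprS; apply: ler_pM => //.
- exact: sum_ge0.
- exact: sum_ge0.
- exact: sum_cuts.
Qed.
End Sums.

Lemma disj2 (p q x : vertex) : p ++ false :: x <> q ++ true :: x.
Proof.
move=> e; have := congr1 size e; rewrite !size_cat /= => /addIn hs.
by have := congr1 (drop (size p)) e; rewrite drop_size_cat // hs drop_size_cat.
Qed.

Lemma nth_rev_xs (p : vertex) i j : (i <= j)%N ->
  nth false (rev (p ++ xs j)) i = (i != j).
Proof.
move=> hij; rewrite rev_cat /xs rev_cons rev_nseq nth_cat size_rcons size_nseq ltnS hij.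
rewrite nth_rcons size_nseq; case: ltngtP hij => // h _.
by rewrite nth_nseq h.
Qed.

Lemma disjx (p q : vertex) i j : i <> j -> p ++ xs i <> q ++ xs j.
Proof.
wlog h : p q i j / (i < j)%N.
  move=> H ne; case: (ltngtP i j) => h.
  - exact: H.
  - move=> e; apply: (H q p j i h); last by rewrite e.
    by move=> e'; apply: ne.
  - by move: ne; rewrite h.
move=> _ e; have := congr1 (fun s => nth false (rev s) i) e => /=.
by rewrite !nth_rev_xs ?(ltnW h) // eqxx (ltn_eqF h).
Qed.

Lemma cuts_uniq k x c : c \in cuts k x -> uniq c /\ (forall v, v \in c -> exists p, v = p ++ x).
Proof.
elim: k x c => [|k IH] x c /=.
  by rewrite inE => /eqP->; split => // v; rewrite inE => /eqP->; exists [::].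
rewrite inE => /orP[/eqP->|/mem_ap[c1 [c2 [h1 h2 ->]]]].
  by split => // v; rewrite inE => /eqP->; exists [::].
have [u1 s1] := IH _ _ h1; have [u2 s2] := IH _ _ h2.
split.
  rewrite cat_uniq u1 u2 /= andbT; apply/hasPn => v /s2 [q ->].
  apply/negP => /s1 [p] e; exact: (disj2 (esym e)).
move=> v; rewrite mem_cat => /orP[/s1|/s2] [p ->].
  by exists (rcons p false); rewrite cat_rcons.
by exists (rcons p true); rewrite cat_rcons.
Qed.

Lemma multi_uniq K m c : c \in multi K m ->
  uniq c /\ (forall v, v \in c -> exists i, (i < m)%N /\ exists p, v = p ++ xs i).
Proof.
elim: m c => [|m IH] c /=.
  by rewrite inE => /eqP->.
move=> /mem_ap[c1 [c2 [h1 h2 ->]]].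
have [u1 s1] := cuts_uniq h1; have [u2 s2] := IH _ h2.
split.
  rewrite cat_uniq u1 u2 /= andbT; apply/hasPn => v /s2 [i [hi [q ->]]].
  apply/negP => /s1 [p] e; apply: (@disjx p q m i) => //.
  by move=> ei; move: hi; rewrite ei ltnn.
move=> v; rewrite mem_cat => /orP[/s1 [p ->]|/s2 [i [hi hp]]].
  by exists m; split => //; exists p.
by exists i; split => //; exact: ltnW.
Qed.

Definition cyl (c : seq vertex) : set (tree_meas 3) := cylinder [seq (v, aa) | v <- c].

Lemma cylE t c : cyl c t <-> allA t c.
Proof.
split => h v.
  move=> hv; apply: (h (v, aa)); by apply/mapP; exists v.
by move=> /mapP[u hu ->] /=; apply: h.
Qed.

Lemma cyl_meas c : measurable (cyl c).
Proof. apply: sub_sigma_algebra; by exists [seq (v, aa) | v <- c]. Qed.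

Definition Bset (K m : nat) : set (tree_meas 3) := \big[setU/set0]_(c <- multi K m) cyl c.

Lemma bigU_iff (s : seq (seq vertex)) t :
  (\big[setU/set0]_(c <- s) cyl c) t <-> exists c, c \in s /\ cyl c t.
Proof.
elim: s => [|d s IH]; first by rewrite big_nil; split => // -[c []].
rewrite big_cons; split.
  case=> [hd|/IH [c [hc h]]]; first by exists d; rewrite inE eqxx.
  by exists c; rewrite inE hc orbT.
move=> [c []]; rewrite inE => /orP[/eqP-> h|hc h]; first by left.
by right; apply/IH; exists c.
Qed.

Lemma bigU_meas (s : seq (seq vertex)) : measurable (\big[setU/set0]_(c <- s) cyl c).
Proof. by apply: bigsetU_measurable => c _; exact: cyl_meas. Qed.

Lemma Bset_mono m : nondecreasing_seq (fun K => Bset K m).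
Proof.
move=> K K' hK; apply/subsetPset => t /bigU_iff [c [hc h]].
by apply/bigU_iff; exists c; split => //; exact: multi_mono hc.
Qed.

Section Meas.
Variables (R : realType) (mu : {measure set (tree_meas 3) -> \bar R}).
Hypothesis hmu : coin_flipping mu.

Lemma mu_cyl c : uniq c -> mu (cyl c) = (w R c)%:E.
Proof.
move=> u; rewrite /cyl hmu.
  by rewrite size_map card_ord.
have -> : [seq p.1 | p <- [seq (v, aa) | v <- c]] = c by elim: c {u} => //= v c ->.
exact: u.
Qed.

Lemma mu_bigU (s : seq (seq vertex)) :
  (mu (\big[setU/set0]_(c <- s) cyl c) <= \sum_(c <- s) mu (cyl c))%E.
Proof.
elim: s => [|d s IH]; first by rewrite !big_nil measure0.
rewrite !big_cons; apply: le_trans (measureU2 _ (cyl_meas d) (bigU_meas s)) _.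
by rewrite leeD2l.
Qed.

Lemma mu_Bset K m : (mu (Bset K m) <= ((2^-1) ^+ m)%:E)%E.
Proof.
apply: le_trans (mu_bigU _) _.
rewrite big_seq (eq_bigr (fun c => (w R c)%:E)); last first.
  by move=> c /multi_uniq [u _]; exact: mu_cyl.
by rewrite -big_seq sumEFin lee_fin; exact: sum_multi.
Qed.

End Meas.

Definition Dset (x : vertex) : set (tree_meas 3) :=
  \bigcup_K \big[setU/set0]_(c <- cuts K x) cyl c.

Definition Dn (i : nat) : set (tree_meas 3) :=
  if (unpickle i : option vertex) is Some x then Dset x else setT.

Lemma langE : (lang Aut : set (tree_meas 3)) = \bigcap_i Dn i.
Proof.
apply/seteqP; split => t.
  move=> /die_of_accept h i _; rewrite /Dn; case: unpickle => // x.
  have [K [c [hc hac]]] := h x; exists K => //.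
  by apply/bigU_iff; exists c; split => //; apply/cylE.
move=> h; apply: accept_of_die => x.
have := h (pickle x) I; rewrite /Dn pickleK => -[K _ /bigU_iff [c [hc /cylE hac]]].
by exists K, c.
Qed.

Lemma lang_meas : measurable (lang Aut : set (tree_meas 3)).
Proof.
rewrite langE; apply: bigcapT_measurable => i; rewrite /Dn.
case: unpickle => [x|]; last exact: measurableT.
by apply: bigcupT_measurable => K; exact: bigU_meas.
Qed.

Lemma lang_small (R : realType) (mu : {measure set (tree_meas 3) -> \bar R}) :
  coin_flipping mu -> forall m, (mu (lang Aut : set (tree_meas 3)) <= ((2^-1) ^+ m)%:E)%E.
Proof.
move=> hmu m.
have sub : (lang Aut : set (tree_meas 3)) `<=` \bigcup_K Bset K m.
  move=> t /die_multi /(_ m) [K [c [hc hac]]]; exists K => //.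
  by apply/bigU_iff; exists c; split => //; apply/cylE.
have mU : measurable (\bigcup_K Bset K m).
  by apply: bigcupT_measurable => K; exact: bigU_meas.
apply: le_trans (le_measure _ _ _ sub) _; rewrite ?inE //; first exact: lang_meas.
have cv := @nondecreasing_cvg_mu _ _ _ mu (fun K => Bset K m) (fun K => bigU_meas (multi K m)) mU (@Bset_mono m).
have e : mu (\bigcup_K Bset K m) = lim ((mu \o Bset^~ m) x @[x --> \oo]).
  by apply/esym; apply: (cvg_lim _ cv).
apply: (@le_trans _ _ (lim ((mu \o Bset^~ m) x @[x --> \oo]))).
  have h := lexx (mu (\bigcup_K Bset K m)); rewrite {2}e in h; exact: h.
apply: lime_le; first by apply/cvg_ex; eexists; exact: cv.
by apply: nearW => K; exact: mu_Bset.
Qed.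

Lemma ereal_small (R : realType) (x : \bar R) :
  (0 <= x)%E -> (forall m, (x <= ((2^-1 : R) ^+ m)%:E)%E) -> x = 0%E.
Proof.
case: x => [r| |] //= r0 hs; last by have := hs 0%N; rewrite leye_eq.
have hr : forall m, r <= (2^-1 : R) ^+ m by move=> m; have := hs m; rewrite lee_fin.
have cv : ((2^-1 : R) ^+ x) @[x --> \oo] --> (0 : R).
  by apply: cvg_expr; rewrite ger0_norm; lra.
have rle : r <= 0.
  rewrite -(cvg_lim _ cv) //; apply: limr_ge; first by apply/cvg_ex; eexists; exact: cv.
  by apply: nearW => m; exact: hr.
congr (_%:E); apply/eqP; rewrite eq_le rle.
by move: r0; rewrite lee_fin.
Qed.

Lemma lang_null (R : realType) (mu : {measure set (tree_meas 3) -> \bar R}) :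
  coin_flipping mu -> mu (lang Aut : set (tree_meas 3)) = 0%E.
Proof.
move=> hmu; apply: ereal_small; first exact: measure_ge0.
exact: lang_small.
Qed.

Import numFieldNormedType.Exports.
Local Open Scope classical_set_scope.
Local Open Scope ring_scope.
Lemma nb1 (f : tree_top 3) v (a : Sigma 3) : f v = a -> nbhs f [set g : tree_top 3 | g v = a].
Proof.
move=> e.
have := @proj_continuous vertex (fun _ => discrete_topology (Sigma 3)) v f.
move=> /(_ [set a]); rewrite /proj e => h.
apply: h. exact: discrete_set1.
Qed.
Lemma cvpt (s : nat -> tree_top 3) (t : tree_top 3) :
  (forall v, \forall k \near \oo, s k v = t v) -> s @ \oo --> t.
Proof.
move=> h.
apply/cvg_sup => v.
apply/cvg_image.
  apply/seteqP; split => // a _; exists (fun _ => a) => //.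
move=> W /= hW.
exists [set g : tree_top 3 | W (g v)].
  have Wt : W (t v) by apply: nbhs_singleton.
  by apply: filterS (h v) => k /= ->.
apply/seteqP; split => [a [g Wg <-] //|a Wa].
by exists (fun _ => a).
Qed.

Lemma nbcut (f : tree_top 3) c : allA f c -> nbhs f [set g : tree_top 3 | allA g c].
Proof.
elim: c => [|v c IH] h.
  by apply: filterS filterT => g _ u; rewrite in_nil.
have h1 : nbhs f [set g : tree_top 3 | g v = aa] by apply: nb1; apply: h; rewrite inE eqxx.
have h2 : nbhs f [set g : tree_top 3 | allA g c].
  by apply: IH => u hu; apply: h; rewrite inE hu orbT.
apply: filterS (filterI h1 h2) => g [g1 g2] u; rewrite inE => /orP[/eqP->//|].
exact: g2.
Qed.

Fixpoint fullcut k (x : vertex) : seq vertex :=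
  if k is k'.+1 then fullcut k' (false :: x) ++ fullcut k' (true :: x) else [:: x].

Lemma fullcut_in k x : fullcut k x \in cuts k x.
Proof.
elim: k x => [|k IH] x /=; first by rewrite inE.
rewrite inE; apply/orP; right; apply/mem_ap.
by exists (fullcut k (false :: x)), (fullcut k (true :: x)).
Qed.

Lemma fullcut_size k x v : v \in fullcut k x -> size v = (k + size x)%N.
Proof.
elim: k x => [|k IH] x /=; first by rewrite inE => /eqP->.
by rewrite mem_cat => /orP[/IH|/IH] ->; rewrite /= addnS.
Qed.

Definition Gset (x : vertex) : set (tree_top 3) := [set t | good t x].

Lemma Gset_nd x : nowhere_dense (Gset x).
Proof.
apply/seteqP; split => // t ht.
pose s k : tree_top 3 := fun v => if v \in fullcut k x then aa else t v.
have cv : s @ \oo --> t.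
  apply: cvpt => v; exists (size v).+1 => // k /= hk; rewrite /s.
  case: ifP => // /fullcut_size e; move: hk; rewrite e; lia.
have [N _ HN] := cv _ ht.
have cl := HN N (leqnn N).
have hs : allA (s N) (fullcut N x) by move=> v hv; rewrite /s hv.
have [g [Gg Cg]] := cl _ (nbcut hs).
exact: (Gg _ _ (fullcut_in N x) Cg).
Qed.

Definition Nk (k : nat) : set (tree_top 3) :=
  if (unpickle k : option vertex) is Some x then Gset x else set0.

Lemma lang_comeager : comeager (lang Aut : set (tree_top 3)).
Proof.
exists Nk; split.
  move=> k; rewrite /Nk; case: unpickle => [x|]; first exact: Gset_nd.
  rewrite /nowhere_dense; apply/seteqP; split => // t.
  rewrite /interior closure0 => /nbhs_singleton.
  by [].
move=> t nacc.
have [x gx] : exists x, good t x.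
  apply: contrapT => ng; apply: nacc; apply: accept_of_die => x.
  apply: contrapT => h; apply: ng; exists x => k c hc ha; apply: h; by exists k, c.
by exists (pickle x) => //; rewrite /Nk pickleK.
Qed.

Theorem proposition2 :
  exists (n : nat) (A : dpa n),
    comeager (lang A : set (tree_top n)) /\
    measurable (lang A : set (tree_meas n)) /\
    (forall (R : realType) (mu : {measure set (tree_meas n) -> \bar R}),
        coin_flipping mu -> mu (lang A : set (tree_meas n)) = 0%E).
Proof.
exists 3%N, Aut; split; first exact: lang_comeager.
split; first exact: lang_meas.
exact: lang_null.
Qed.
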